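(* Let $n\geq 3$ be a multiple of $3$. Then $\gamma_{sR}(C_3\vee C_n)=1$.
   Context: $C_n$ denotes the cycle on $n$ vertices. For a graph $G=(V,E)$ and $x\in V$, $N_G[x]=\{x\}\cup\{y: xy\in E\}$. A signed Roman dominating function (SRDF) on $G$ is a function $f:V\to\{-1,1,2\}$ such that (a) $\sum_{y\in N_G[x]}f(y)\geq 1$ for every $x\in V$, and (b) every vertex $x$ with $f(x)=-1$ is adjacent to at least one vertex $y$ with $f(y)=2$. The weight of $f$ is $\sum_{x\in V}f(x)$, and $\gamma_{sR}(G)$ is the minimum weight of an SRDF on $G$. The join $G_1\vee G_2$ of two graphs has vertex set $V(G_1)\cup V(G_2)$ (disjoint union) and edge set $E(G_1)\cup E(G_2)\cup\{uv: u\in V(G_1), v\in V(G_2)\}$. *)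

(* Defs.v *)
From mathcomp Require Import all_boot all_order all_algebra.
Set Implicit Arguments. Unset Strict Implicit. Unset Printing Implicit Defensive.
Import Order.TTheory GRing.Theory Num.Theory.
Local Open Scope ring_scope.

Record graph := Graph {
  vert : finType;
  adj : rel vert;
  adj_sym : symmetric adj;
  adj_irr : irreflexive adj }.

Definition closed_nbhd (G : graph) (x : vert G) : {set vert G} :=
  [set y | (y == x) || adj x y].

Definition cycle_adj (n : nat) : rel 'I_n :=
  fun i j => (i != j) && ((j == (i.+1 %% n)%N :> nat) || (i == (j.+1 %% n)%N :> nat)).

Lemma cycle_adj_sym n : symmetric (@cycle_adj n).
Proof. by move=> i j; rewrite /cycle_adj eq_sym orbC. Qed.

Lemma cycle_adj_irr n : irreflexive (@cycle_adj n).
Proof. by move=> i; rewrite /cycle_adj eqxx. Qed.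

Definition Cycle (n : nat) : graph := Graph (@cycle_adj_sym n) (@cycle_adj_irr n).

Definition join_adj (G1 G2 : graph) : rel (vert G1 + vert G2) :=
  fun u v => match u, v with
  | inl a, inl b => adj a b
  | inr a, inr b => adj a b
  | _, _ => true
  end.

Lemma join_adj_sym G1 G2 : symmetric (@join_adj G1 G2).
Proof. by case=> a [] b //=; apply: adj_sym. Qed.

Lemma join_adj_irr G1 G2 : irreflexive (@join_adj G1 G2).
Proof. by case=> a /=; apply: adj_irr. Qed.

Definition join (G1 G2 : graph) : graph :=
  Graph (@join_adj_sym G1 G2) (@join_adj_irr G1 G2).

Definition is_SRDF (G : graph) (f : vert G -> int) : Prop :=
  (forall x, f x \in [:: -1; 1; 2]) /\
  (forall x, 1 <= \sum_(y in closed_nbhd x) f y) /\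
  (forall x, f x = -1 -> exists y, adj x y /\ f y = 2).

Definition weight (G : graph) (f : vert G -> int) : int := \sum_(x : vert G) f x.

Definition gamma_sR_is (G : graph) (k : int) : Prop :=
  (exists f : vert G -> int, is_SRDF f /\ weight f = k) /\
  (forall f : vert G -> int, is_SRDF f -> k <= weight f).

(* Main.v *)
Require Import Defs.
From mathcomp Require Import all_boot all_order all_algebra.
From mathcomp Require Import zify.
Local Open Scope ring_scope.

Definition gv (j : nat) : int := if (j %% 3 == 0)%N then 2 else -1.

Definition fW (n : nat) (x : 'I_3 + 'I_n) : int :=
  match x with inl a => if (val a == 0)%N then -1 else 1 | inr j => gv j end.

Lemma modn_le (a n : nat) : (0 < n)%N -> (a <= n)%N ->
  (a %% n = if a == n then 0 else a)%N.
Proof.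
move=> n0 an; case: eqP => [->|ne]; first by rewrite modnn.
by rewrite modn_small // ltn_neqAle an andbT; apply/eqP.
Qed.

Lemma sum_cyc k : \sum_(0 <= j < 3 * k) gv j = 0.
Proof.
elim: k => [|k IH]; first by rewrite big_geq.
rewrite mulnS !addSn add0n !big_nat_recr /= ?IH; try lia.
rewrite /gv.
have -> : ((3 * k) %% 3 = 0)%N by lia.
have -> : ((3 * k).+1 %% 3 = 1)%N by lia.
have -> : ((3 * k).+2 %% 3 = 2)%N by lia.
by [].
Qed.

Theorem mainTheorem4 (n : nat) : (3 <= n)%N -> (3 %| n)%N ->
  gamma_sR_is (join (Cycle 3) (Cycle n)) 1.
Proof.
move=> n3 /dvdnP [k Hk].
have n0 : (0 < n)%N by lia.
have nb0 (f : vert (join (Cycle 3) (Cycle n)) -> int) :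
    \sum_(y in closed_nbhd (inl ord0 : vert (join (Cycle 3) (Cycle n)))) f y = weight f.
  rewrite /weight; apply: eq_bigl => y; rewrite /closed_nbhd inE.
  case: y => [b|b] //=.
  case: b => [[|[|[|b]]] Hb] //.
split; last first.
  by move=> f [_ [H _]]; rewrite -nb0; apply: H.
pose F : vert (join (Cycle 3) (Cycle n)) -> int := @fW n.
exists F.
have wt : weight F = 1.
  rewrite /weight big_sumType /=.
  rewrite !big_ord_recl big_ord0 /=.
  rewrite /F /=.
  by rewrite -(big_mkord xpredT gv) Hk mulnC sum_cyc.
split=> //.
split; [|split].
- by case=> [[[|[|[|b]]] Hb]|j] //=; rewrite /gv; case: ifP.
- case=> [a|i].
    have -> : closed_nbhd (inl a : vert (join (Cycle 3) (Cycle n))) =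
              closed_nbhd (inl ord0 : vert (join (Cycle 3) (Cycle n))).
      apply/setP => y; rewrite !inE.
      case: y => [b|b] //=; rewrite ?orbT //.
      by case: a => [[|[|[|a]]] Ha]; case: b => [[|[|[|b]]] Hb].
    by rewrite nb0 wt.
  have ilt := ltn_ord i.
  set s := (if i.+1 == n then 0 else i.+1)%N.
  set p := (if (i : nat) == 0 then n.-1 else i.-1)%N.
  have sn : (s < n)%N by rewrite /s; case: ifP; move=> *; lia.
  have pn : (p < n)%N by rewrite /p; case: ifP; move=> *; lia.
  rewrite big_sumType /=.
  rewrite (eq_bigl (fun j : 'I_n => j \in [:: i; Ordinal sn; Ordinal pn])); last first.
    move=> j; rewrite /closed_nbhd !inE /= /cycle_adj /=.
    have jlt := ltn_ord j.
    rewrite (_ : (inr j == _) = (j == i)); last by apply/eqP/eqP=> [[]|->].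
    have -> : (j == i) = ((j : nat) == (i : nat)) by []. rewrite !modn_le //; try lia.
    have -> : (i != j) = ((i : nat) != (j : nat)) by [].
    have -> : (j == Ordinal sn) = ((j : nat) == s) by [].
    have -> : (j == Ordinal pn) = ((j : nat) == p) by [].
    move: sn pn; rewrite /s /p; case: ifP; case: ifP; case: ifP; move=> *; lia.
  rewrite -big_uniq /=; last first.
    rewrite !inE -!val_eqE /= /s /p andbT.
    case: ifP; case: ifP; move=> *; lia.
  rewrite !big_cons big_nil /=.
  rewrite (eq_bigl xpredT) //.
  rewrite !big_ord_recl big_ord0 /= /gv /s /p.
  by case E1: (i.+1 == n); case E2: ((i : nat) == 0%N); rewrite ?mod0n ?eqxx; repeat (case: ifP => ?); lia.
  by move=> a; rewrite /closed_nbhd inE.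
- case=> [a|i] /=.
    case: ifP => // _ _; exists (inr (Ordinal n0)); split => //.
  rewrite /gv; case: ifP => // Hi _.
  have ilt := ltn_ord i.
  case E: (i %% 3 == 2)%N.
    case E1: (i.+1 == n).
      exists (inr (Ordinal n0)); split; last by [].
      rewrite /= /cycle_adj /=.
      have -> : (i != Ordinal n0) = ((i : nat) != 0%N) by [].
      rewrite !modn_le //; repeat (case: ifP => ?); lia.
    have sn : (i.+1 < n)%N by lia.
    exists (inr (Ordinal sn)); split; last by rewrite /F /= /gv; case: ifP => //; move=> *; lia.
    rewrite /= /cycle_adj /=.
    have -> : (i != Ordinal sn) = ((i : nat) != i.+1) by [].
    rewrite !modn_le //; repeat (case: ifP => ?); lia.
  have ip : (i.-1 < n)%N by lia.
  exists (inr (Ordinal ip)); split; last by rewrite /F /= /gv; case: ifP => //; move=> *; lia.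
  rewrite /= /cycle_adj /=.
  have -> : (i != Ordinal ip) = ((i : nat) != i.-1) by [].
  rewrite !modn_le //; repeat (case: ifP => ?); lia.
Qed.
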